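(* Let $n$ be a nonnegative integer. Suppose there exist a nonnegative integer $B$ and integers $x,y,z$ such that $$\frac{2n+10B}{3}-10B^2=2x^2+3y^2+4z^2+(2x+3y+4z)^2<(B+1)^2.$$ Then there exist nonnegative integers $w_0,x_0,y_0,z_0$ with $n=p_5(w_0)+2p_5(x_0)+3p_5(y_0)+4p_5(z_0)$.
   Context: For $k\in\mathbb{Z}$, $p_5(k)=k(3k-1)/2$. *)

(* Defs.v *)
From mathcomp Require Import all_boot all_order all_algebra.
Set Implicit Arguments. Unset Strict Implicit. Unset Printing Implicit Defensive.
Import Order.TTheory GRing.Theory Num.Theory.
Local Open Scope ring_scope.

(* Generalized pentagonal numbers p_5(k) = k(3k-1)/2; k(3k-1) is always even,
   so the integer division is exact. *)
Definition p5 (k : int) : int := ((k * (3 * k - 1)) %/ 2)%Z.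

(* Main.v *)
Require Import Defs.
From mathcomp Require Import all_boot all_order all_algebra.
From mathcomp Require Import zify ring lra.
Import Order.TTheory GRing.Theory Num.Theory.
Local Open Scope ring_scope.

Lemma p5E k : 2 * p5 k = k * (3 * k - 1).
Proof.
rewrite /p5.
have Hk := divz_eq k 2.
have r0 := @modz_ge0 k 2 isT. have r2 := @ltz_pmod k 2 isT.
set q := (k %/ 2)%Z in Hk *. set r := (k %% 2)%Z in Hk r0 r2.
have [Er|Er] : r = 0 \/ r = 1 by lia.
  all: rewrite Er in Hk; clearbody q r.
- have -> : k * (3 * k - 1) = (q * (3 * k - 1)) * 2 by rewrite Hk; ring.
  by rewrite mulzK //; ring.
- have -> : k * (3 * k - 1) = (k * (3 * q + 1)) * 2 by rewrite {2}Hk; ring.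
  by rewrite mulzK // Hk; ring.
Qed.

Lemma bnd (B x Q a: int) : 0 <= B -> 0 <= a -> (Q < (B+1)^+2) -> a + x^+2 <= Q -> 0 <= B + x.
Proof. move=> *. nia. Qed.

Lemma leq_of_eq (a b : int) : a = b -> a <= b.
Proof. by move->. Qed.

Ltac pos := repeat first [ apply: addr_ge0 | apply: sqr_ge0 | apply: mulr_ge0 | done ].

Theorem lemma3p2 (n : nat) :
  (exists (B : nat) (x y z : int),
      ((2 * n + 10 * B)%:R / 3 - 10 * (B%:R) ^+ 2 : rat)
        = (2 * x ^+ 2 + 3 * y ^+ 2 + 4 * z ^+ 2 + (2 * x + 3 * y + 4 * z) ^+ 2)%:~R
   /\ 2 * x ^+ 2 + 3 * y ^+ 2 + 4 * z ^+ 2 + (2 * x + 3 * y + 4 * z) ^+ 2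
        < (B%:Z + 1) ^+ 2) ->
  exists w0 x0 y0 z0 : nat,
    n%:Z = p5 w0%:Z + 2 * p5 x0%:Z + 3 * p5 y0%:Z + 4 * p5 z0%:Z.
Proof.
move=> [B [x [y [z [H Hlt]]]]].
set Q := (2 * x ^+ 2 + 3 * y ^+ 2 + 4 * z ^+ 2 + (2 * x + 3 * y + 4 * z) ^+ 2) in H Hlt.
have [Q' EQ] : exists Q', Q' = Q by eexists.
rewrite -EQ in H Hlt; rewrite /Q in EQ; clear Q.
have HI : 2 * n%:Z = 3 * (Q' + 10 * B%:Z ^+ 2) - 10 * B%:Z.
  have H' : (2 * n%:R + 10 * B%:R : rat) = 3 * (Q'%:~R + 10 * B%:R ^+ 2).
    by rewrite -H natrD !natrM; field.
  have HD : ((2 * n%:Z - (3 * (Q' + 10 * B%:Z ^+ 2) - 10 * B%:Z))%:~R : rat)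
      = (2 * n%:R + 10 * B%:R) - 3 * (Q'%:~R + 10 * B%:R ^+ 2) by ring.
  move: HD; rewrite H' subrr => /eqP; rewrite intr_eq0 subr_eq0 => /eqP //.
have p5E' : forall k c, 2 * (c * p5 k) = c * (k * (3 * k - 1)).
  by move=> k c; rewrite mulrCA p5E.
have B0 : 0 <= B%:Z by [].
have hw : 0 <= B%:Z + (-(2 * x + 3 * y + 4 * z)).
  apply: (@bnd _ _ _ (2 * x ^+ 2 + 3 * y ^+ 2 + 4 * z ^+ 2) B0 _ Hlt); first pos.
  rewrite EQ; apply: leq_of_eq; ring.
have hx : 0 <= B%:Z + x.
  apply: (@bnd _ _ _ (x ^+ 2 + 3 * y ^+ 2 + 4 * z ^+ 2 + (2 * x + 3 * y + 4 * z) ^+ 2) B0 _ Hlt); first pos.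
  rewrite EQ; apply: leq_of_eq; ring.
have hy : 0 <= B%:Z + y.
  apply: (@bnd _ _ _ (2 * x ^+ 2 + 2 * y ^+ 2 + 4 * z ^+ 2 + (2 * x + 3 * y + 4 * z) ^+ 2) B0 _ Hlt); first pos.
  rewrite EQ; apply: leq_of_eq; ring.
have hz : 0 <= B%:Z + z.
  apply: (@bnd _ _ _ (2 * x ^+ 2 + 3 * y ^+ 2 + 3 * z ^+ 2 + (2 * x + 3 * y + 4 * z) ^+ 2) B0 _ Hlt); first pos.
  rewrite EQ; apply: leq_of_eq; ring.
exists (absz (B%:Z - (2 * x + 3 * y + 4 * z))%R), (absz (B%:Z + x)%R), (absz (B%:Z + y)%R), (absz (B%:Z + z)%R).
rewrite !gez0_abs //.
apply: (@mulfI _ 2) => //.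
rewrite HI !mulrDr !p5E' !p5E EQ; ring.
Qed.
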